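(* Let $\alpha\in\mathbb{N}_0$. For every $y\in C^{(2\alpha+4)}[0,\infty)$, $$(-1)^{\alpha+1}e^x x\,D_x^{\alpha+2}\big\{e^{-x}D_x^{\alpha+2}[x^{\alpha+1}y(x)]\big\}=\sum_{i=1}^{2\alpha+4}d_i^{\alpha}(x)\,D_x^i y(x),$$ where $$d_i^{\alpha}(x)=\sum_{j=\max(1,\,i-\alpha-2)}^{\min(i,\alpha+2)}(-1)^{i+j+1}\binom{\alpha+1}{j-1}\binom{\alpha+2}{i-j}(i+1)_{\alpha+2-j}\,x^j.$$
   Context: $D_x^i$ denotes the $i$-fold derivative in $x$; $(a)_k=a(a+1)\cdots(a+k-1)$ is the Pochhammer symbol. *)

(* Defs.v *)
From Stdlib Require Import Reals List.
Open Scope R_scope.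

Definition deriv_nonneg (f : R -> R) (x l : R) : Prop :=
  forall eps, 0 < eps -> exists delta, 0 < delta /\
    forall h, h <> 0 -> Rabs h < delta -> 0 <= x + h ->
      Rabs ((f (x + h) - f x) / h - l) < eps.

Definition cont_nonneg (f : R -> R) : Prop :=
  forall x, 0 <= x -> forall eps, 0 < eps -> exists delta, 0 < delta /\
    forall z, 0 <= z -> Rabs (z - x) < delta -> Rabs (f z - f x) < eps.

Definition is_derivs (n : nat) (f : R -> R) (F : nat -> R -> R) : Prop :=
  (forall x, 0 <= x -> F O x = f x) /\
  (forall k, (k < n)%nat -> forall x, 0 <= x -> deriv_nonneg (F k) x (F (S k) x)).

Definition is_Cn_derivs (n : nat) (f : R -> R) (F : nat -> R -> R) : Prop :=
  is_derivs n f F /\ cont_nonneg (F n).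

Fixpoint poch (a : R) (k : nat) : R :=
  match k with
  | O => 1
  | S k' => poch a k' * (a + INR k')
  end.

(* sum_{j=m}^{n} f j  (empty if n < m). *)
Definition sum_range (m n : nat) (f : nat -> R) : R :=
  fold_right (fun j acc => f j + acc) 0 (seq m (S n - m)).

Definition d_coef (alpha i : nat) (x : R) : R :=
  sum_range (Nat.max 1 (i - alpha - 2)) (Nat.min i (alpha + 2))
    (fun j => (-1) ^ (i + j + 1) * Binomial.C (alpha + 1) (j - 1)
              * Binomial.C (alpha + 2) (i - j)
              * poch (INR (i + 1)) (alpha + 2 - j) * x ^ j).

(* Main.v *)
Require Import Defs.
From Stdlib Require Import Reals List Lra Lia.
Open Scope R_scope.

Definition Dom (x : R) : R -> Prop := fun h => h <> 0 /\ 0 <= x + h.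

Lemma deriv_lim f x l : deriv_nonneg f x l <->
  limit1_in (fun h => (f (x+h) - f x)/h) (Dom x) l 0.
Proof.
  unfold deriv_nonneg, limit1_in, limit_in, Dom; simpl; unfold R_dist.
  split.
  - intros H eps He. destruct (H eps He) as [d [Hd H']]. exists d; split; [lra|].
    intros h [[h0 h1] h2]. rewrite Rminus_0_r in h2. now apply H'.
  - intros H eps He. destruct (H eps He) as [d [Hd H']]. exists d; split; [lra|].
    intros h h0 h1 h2. apply H'. rewrite Rminus_0_r. tauto.
Qed.

Lemma lim_ext f g D l x0 : (forall h, D h -> f h = g h) ->
  limit1_in f D l x0 -> limit1_in g D l x0.
Proof.
  unfold limit1_in, limit_in; intros E H eps He.
  destruct (H eps He) as [d [Hd H']]. exists d; split; auto.
  intros h [Dh Hh]. rewrite <- E by auto. apply H'; auto.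
Qed.

Lemma lim_id D : limit1_in (fun h => h) D 0 0.
Proof.
  unfold limit1_in, limit_in; intros eps He. exists eps; split; auto.
  intros h [_ Hh]; auto.
Qed.

Lemma deriv_const c x : deriv_nonneg (fun _ => c) x 0.
Proof.
  apply deriv_lim. eapply lim_ext; [|apply (limit_free (fun _ => 0) _ 0 0)].
  intros h [h0 _]. simpl. field. auto.
Qed.

Lemma deriv_plus f g x lf lg : deriv_nonneg f x lf -> deriv_nonneg g x lg ->
  deriv_nonneg (fun z => f z + g z) x (lf + lg).
Proof.
  rewrite !deriv_lim; intros Hf Hg.
  eapply lim_ext; [|apply (limit_plus _ _ _ _ _ _ Hf Hg)].
  intros h [h0 _]. simpl. field. auto.
Qed.

Lemma deriv_mult f g x lf lg : deriv_nonneg f x lf -> deriv_nonneg g x lg ->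
  deriv_nonneg (fun z => f z * g z) x (lf * g x + f x * lg).
Proof.
  rewrite !deriv_lim; intros Hf Hg.
  assert (Hc : limit1_in (fun h => f x + h * ((f (x+h) - f x)/h)) (Dom x) (f x + 0 * lf) 0).
  { apply (limit_plus (fun _ => f x) (fun h => h * ((f (x+h) - f x)/h))).
    apply (limit_free (fun _ => f x) _ 0 0).
    apply (limit_mul (fun h => h) (fun h => (f (x+h) - f x)/h)); auto. apply lim_id. }
  assert (H1 := limit_mul _ _ _ _ _ _ Hf (limit_free (fun _ => g x) (Dom x) 0 0)).
  assert (H2 := limit_mul _ _ _ _ _ _ Hc Hg).
  assert (H3 := limit_plus _ _ _ _ _ _ H1 H2).
  replace (lf * g x + f x * lg) with (lf * g x + (f x + 0 * lf) * lg) by ring.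
  eapply lim_ext; [|apply H3].
  intros h [h0 _]. simpl. field. auto.
Qed.

Lemma deriv_of_pt f x l : derivable_pt_lim f x l -> deriv_nonneg f x l.
Proof.
  intros H eps He. destruct (H eps He) as [d Hd]. exists d; split; [apply cond_pos|].
  intros h h0 h1 _. apply Hd; auto.
Qed.

Lemma deriv_unique f x l1 l2 : 0 <= x -> deriv_nonneg f x l1 -> deriv_nonneg f x l2 -> l1 = l2.
Proof.
  intros Hx H1 H2. destruct (Req_dec l1 l2) as [|Hn]; auto. exfalso.
  set (e := Rabs (l1 - l2) / 2).
  assert (He : 0 < e) by (unfold e; assert (0 < Rabs (l1 - l2)) by (apply Rabs_pos_lt; lra); lra).
  destruct (H1 e He) as [d1 [Hd1 K1]]. destruct (H2 e He) as [d2 [Hd2 K2]].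
  set (h := Rmin d1 d2 / 2).
  assert (Hh : 0 < h) by (unfold h; assert (0 < Rmin d1 d2) by (apply Rmin_glb_lt; lra); lra).
  assert (Hh1 : h < d1) by (unfold h; assert (Rmin d1 d2 <= d1) by apply Rmin_l; lra).
  assert (Hh2 : h < d2) by (unfold h; assert (Rmin d1 d2 <= d2) by apply Rmin_r; lra).
  assert (A1 := K1 h ltac:(lra) ltac:(rewrite Rabs_pos_eq; lra) ltac:(lra)).
  assert (A2 := K2 h ltac:(lra) ltac:(rewrite Rabs_pos_eq; lra) ltac:(lra)).
  set (q := (f (x + h) - f x) / h) in *.
  assert (Rabs (l1 - l2) <= Rabs (l1 - q) + Rabs (q - l2)).
  { replace (l1 - l2) with ((l1 - q) + (q - l2)) by ring. apply Rabs_triang. }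
  rewrite Rabs_minus_sym in A1. unfold e in *. lra.
Qed.
Lemma deriv_ext f g x l : (forall z, 0 <= z -> f z = g z) -> 0 <= x ->
  deriv_nonneg f x l -> deriv_nonneg g x l.
Proof.
  intros E Hx H eps He. destruct (H eps He) as [d [Hd H']]. exists d; split; auto.
  intros h h0 h1 h2. rewrite <- !E by auto. auto.
Qed.

Lemma deriv_eql f x l l' : deriv_nonneg f x l -> l = l' -> deriv_nonneg f x l'.
Proof. intros H ->; auto. Qed.

Fixpoint sm (n : nat) (f : nat -> R) : R :=
  match n with O => 0 | S n' => sm n' f + f n' end.

Lemma sm_ext n f g : (forall i, (i < n)%nat -> f i = g i) -> sm n f = sm n g.
Proof. induction n; simpl; intros E; auto. rewrite IHn, E; auto. Qed.

Lemma sm_plus n f g : sm n (fun i => f i + g i) = sm n f + sm n g.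
Proof. induction n; simpl; [ring|]. rewrite IHn. ring. Qed.

Lemma sm_scal n c f : sm n (fun i => c * f i) = c * sm n f.
Proof. induction n; simpl; [ring|]. rewrite IHn. ring. Qed.

Lemma sm_zero n f : (forall i, (i < n)%nat -> f i = 0) -> sm n f = 0.
Proof. induction n; simpl; intros E; auto. rewrite IHn, E; auto. ring. Qed.

Lemma sm_front n f : sm (S n) f = f O + sm n (fun i => f (S i)).
Proof. induction n; simpl in *; [ring|]. rewrite IHn. ring. Qed.

Lemma sm_split m k f : sm (m + k) f = sm m f + sm k (fun i => f (m + i)%nat).
Proof. induction k; simpl. rewrite Nat.add_0_r; ring. rewrite Nat.add_succ_r; simpl. rewrite IHk. ring. Qed.

Lemma sm_swap n m f : sm n (fun i => sm m (fun j => f i j)) = sm m (fun j => sm n (fun i => f i j)).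
Proof.
  induction n; simpl. symmetry; apply sm_zero; auto.
  rewrite IHn, sm_plus. auto.
Qed.

Lemma sm_rev n f : sm n f = sm n (fun i => f (n - 1 - i)%nat).
Proof.
  induction n; auto. change (sm n f + f n = sm (S n) (fun i => f (S n - 1 - i)%nat)).
  rewrite sm_front, IHn.
  replace (S n - 1 - 0)%nat with n by lia. rewrite Rplus_comm. f_equal.
  apply sm_ext; intros i Hi. f_equal. lia.
Qed.

Lemma sm_trunc N M f : (M <= N)%nat -> (forall i, (M <= i < N)%nat -> f i = 0) -> sm N f = sm M f.
Proof.
  intros H E. replace N with (M + (N - M))%nat by lia. rewrite sm_split.
  rewrite (sm_zero (N - M)). ring. intros i Hi. apply E. lia.
Qed.

Lemma deriv_sm n f g x : (forall i, (i < n)%nat -> deriv_nonneg (f i) x (g i)) ->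
  deriv_nonneg (fun z => sm n (fun i => f i z)) x (sm n g).
Proof.
  induction n; simpl; intros E. apply deriv_const.
  apply deriv_plus; auto.
Qed.

Lemma derivs_unique m f F F' : is_derivs m f F -> is_derivs m f F' ->
  forall k, (k <= m)%nat -> forall x, 0 <= x -> F k x = F' k x.
Proof.
  intros [A0 A1] [B0 B1]. induction k; intros Hk x Hx.
  rewrite A0, B0; auto.
  apply (deriv_unique (F k) x).
  - exact Hx.
  - apply A1; auto; lia.
  - apply (deriv_ext (F' k)). intros z Hz; symmetry; apply IHk; auto; lia. auto.
    apply B1; auto; lia.
Qed.

Lemma derivs_ext_f m f g F : (forall z, 0 <= z -> f z = g z) -> is_derivs m f F -> is_derivs m g F.
Proof. intros E [A0 A1]; split; auto. intros x Hx; rewrite <- E; auto. Qed.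

Lemma derivs_le m k f F : is_derivs m f F -> (k <= m)%nat -> is_derivs k f F.
Proof. intros [A0 A1] H; split; auto. intros j Hj; apply A1; lia. Qed.

Lemma derivs_shift m k f F : is_derivs m f F -> (k <= m)%nat ->
  is_derivs (m - k) (F k) (fun j => F (k + j)%nat).
Proof.
  intros [A0 A1] H; split. intros x _; rewrite Nat.add_0_r; auto.
  intros j Hj x Hx. rewrite Nat.add_succ_r. apply A1; auto; lia.
Qed.

Fixpoint binom (k l : nat) : R :=
  match k, l with
  | O, O => 1
  | O, S _ => 0
  | S _, O => 1
  | S k', S l' => binom k' l' + binom k' (S l')
  end.

Lemma binom_0 k : binom k 0 = 1.
Proof. destruct k; auto. Qed.

Lemma binom_gt k l : (k < l)%nat -> binom k l = 0.
Proof.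
  revert l; induction k; intros l H; destruct l; simpl; try lia; auto.
  rewrite !IHk; try lia. ring.
Qed.

Definition leib (P F : nat -> R -> R) (k : nat) (x : R) : R :=
  sm (S k) (fun l => binom k l * P l x * F (k - l)%nat x).

Lemma leib_step P F k x :
  sm (S k) (fun l => binom k l * (P (S l) x * F (k - l)%nat x + P l x * F (S (k - l)) x))
  = leib P F (S k) x.
Proof.
  unfold leib.
  assert (R1 : sm (S (S k)) (fun l => binom (S k) l * P l x * F (S k - l)%nat x)
     = P O x * F (S k) x + (sm (S k) (fun l => binom k l * P (S l) x * F (k - l)%nat x)
        + sm (S k) (fun l => binom k (S l) * P (S l) x * F (k - l)%nat x))).
  { rewrite sm_front, binom_0, <- sm_plus. replace (S k - 0)%nat with (S k) by lia.
    f_equal. ring. apply sm_ext; intros i Hi. simpl. ring. }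
  assert (R3 : sm (S k) (fun l => binom k (S l) * P (S l) x * F (k - l)%nat x)
     = sm k (fun l => binom k (S l) * P (S l) x * F (k - l)%nat x)).
  { simpl. rewrite (binom_gt k (S k)) by lia. ring. }
  assert (R2 : sm (S k) (fun l => binom k l * P l x * F (S (k - l)) x)
     = P O x * F (S k) x + sm k (fun l => binom k (S l) * P (S l) x * F (k - l)%nat x)).
  { rewrite sm_front, binom_0. replace (S (k - 0)) with (S k) by lia. f_equal. ring.
    apply sm_ext; intros i Hi. f_equal. f_equal. lia. }
  rewrite R1, R3.
  rewrite (sm_ext (S k) _ (fun l => binom k l * P (S l) x * F (k - l)%nat x
                              + binom k l * P l x * F (S (k - l)) x)).
  2:{ intros i Hi. ring. }
  rewrite sm_plus, R2. ring.
Qed.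

Lemma leibniz m p f P F : is_derivs m p P -> is_derivs m f F ->
  is_derivs m (fun x => p x * f x) (leib P F).
Proof.
  intros [A0 A1] [B0 B1]; split.
  - intros x Hx. unfold leib. simpl. rewrite A0, B0 by auto. ring.
  - intros k Hk x Hx. rewrite <- leib_step. unfold leib.
    apply (deriv_sm (S k) (fun l z => binom k l * P l z * F (k - l)%nat z)). intros l Hl.
    apply deriv_eql with ((0 * P l x + binom k l * P (S l) x) * F (k - l)%nat x
       + binom k l * P l x * F (S (k - l)) x).
    apply (deriv_mult (fun z => binom k l * P l z) (F (k - l)%nat)).
    apply (deriv_mult (fun _ => binom k l) (P l)). apply deriv_const.
    apply A1; auto; lia. apply B1; auto; lia. ring.
Qed.

Fixpoint fall (a l : nat) : R :=
  match l with O => 1 | S l' => fall a l' * INR (a - l') end.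

Definition powfam (a : nat) (l : nat) (x : R) : R := fall a l * x ^ (a - l).
Definition expfam (l : nat) (x : R) : R := (-1) ^ l * exp (- x).

Lemma powfam_derivs m a : is_derivs m (fun x => x ^ a) (powfam a).
Proof.
  split. intros x _; unfold powfam; simpl. rewrite Nat.sub_0_r; ring.
  intros k _ x _. unfold powfam.
  apply deriv_eql with (0 * x ^ (a - k) + fall a k * (INR (a - k) * x ^ Nat.pred (a - k))).
  apply (deriv_mult (fun _ => fall a k) (fun z => z ^ (a - k))). apply deriv_const.
  apply deriv_of_pt, derivable_pt_lim_pow.
  simpl. replace (Nat.pred (a - k)) with (a - S k)%nat by lia. ring.
Qed.

Lemma dexp x : derivable_pt_lim (fun z => exp (- z)) x (- exp (- x)).
Proof.
  replace (- exp (- x)) with (exp (-x) * (-1)) by ring.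
  apply (derivable_pt_lim_comp (fun z => - z) exp x (-1) (exp (-x))).
  replace (-1) with (- 1) by ring. apply (derivable_pt_lim_opp id x 1). apply derivable_pt_lim_id.
  apply derivable_pt_lim_exp.
Qed.

Lemma expfam_derivs m : is_derivs m (fun x => exp (- x)) expfam.
Proof.
  split. intros x _; unfold expfam; simpl; ring.
  intros k _ x _. unfold expfam.
  apply deriv_eql with (0 * exp (- x) + (-1) ^ k * (- exp (- x))).
  apply (deriv_mult (fun _ => (-1) ^ k) (fun z => exp (- z))). apply deriv_const.
  apply deriv_of_pt, dexp. simpl; ring.
Qed.


Lemma sum_range_sm m n f : sum_range m n f = sm (S n - m) (fun t => f (m + t)%nat).
Proof.
  unfold sum_range. generalize (S n - m)%nat as k. intro k. revert m.
  induction k; intros m; auto. simpl seq. simpl fold_right. rewrite IHk, sm_front.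
  rewrite Nat.add_0_r. f_equal. apply sm_ext; intros; f_equal; lia.
Qed.

Lemma sm_ind m n N f : (n < N)%nat ->
  sm N (fun t => if andb (m <=? t)%nat (t <=? n)%nat then f t else 0) = sm (S n - m) (fun t => f (m + t)%nat).
Proof.
  intros HN. destruct (Nat.le_gt_cases m n) as [Hmn|Hmn].
  - replace N with (m + (N - m))%nat by lia. rewrite sm_split.
    rewrite (sm_zero m). 2:{ intros i Hi. destruct (Nat.leb_spec m i); [lia|]. reflexivity. }
    rewrite Rplus_0_l. rewrite (sm_trunc (N - m) (S n - m)); [|lia|].
    + apply sm_ext; intros i Hi. destruct (Nat.leb_spec m (m + i)); [|lia].
      destruct (Nat.leb_spec (m + i) n); [|lia]. reflexivity.
    + intros i Hi. destruct (Nat.leb_spec (m + i) n); [lia|]. rewrite Bool.andb_false_r. reflexivity.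
  - replace (S n - m)%nat with O by lia. simpl. apply sm_zero. intros i Hi.
    destruct (Nat.leb_spec m i); destruct (Nat.leb_spec i n); try lia; reflexivity.
Qed.

Definition dterm alpha i j x :=
  (-1) ^ (i + j + 1) * Binomial.C (alpha + 1) (j - 1)
              * Binomial.C (alpha + 2) (i - j)
              * poch (INR (i + 1)) (alpha + 2 - j) * x ^ j.

Lemma R1 alpha (Y : nat -> R -> R) x :
  sum_range 1 (2 * alpha + 4) (fun i => d_coef alpha i x * Y i x)
  = sm (alpha + 2) (fun j => sm (S (alpha + 2)) (fun s =>
        dterm alpha (1 + (j + s)) (S j) x * Y (1 + (j + s))%nat x)).
Proof.
  rewrite sum_range_sm. replace (S (2 * alpha + 4) - 1)%nat with (2 * alpha + 4)%nat by lia.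
  rewrite (sm_ext _ _ (fun t => sm (S (alpha + 2)) (fun j =>
     (if andb (Nat.max 1 (1 + t - alpha - 2) <=? j)%nat (j <=? Nat.min (1 + t) (alpha + 2))%nat
      then dterm alpha (1 + t) j x * Y (1 + t)%nat x else 0)))).
  2:{ intros t Ht.
      replace (d_coef alpha (1 + t) x) with (sum_range (Nat.max 1 (1 + t - alpha - 2)) (Nat.min (1 + t) (alpha + 2))
                (fun j => dterm alpha (1 + t) j x)) by reflexivity.
      rewrite sum_range_sm, <- (sm_ind _ _ (S (alpha + 2)) (fun j => dterm alpha (1 + t) j x)) by lia.
      rewrite Rmult_comm, <- sm_scal. apply sm_ext; intros j Hj.
      destruct (andb _ _); ring. }
  rewrite sm_swap, sm_front. rewrite sm_zero.
  2:{ intros i Hi. destruct (Nat.leb_spec (Nat.max 1 (1 + i - alpha - 2)) 0); [lia|]. reflexivity. }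
  rewrite Rplus_0_l. apply sm_ext; intros j Hj.
  assert (E := sm_ind j (j + (alpha + 2)) (2 * alpha + 4)
     (fun t => dterm alpha (1 + t) (S j) x * Y (1 + t)%nat x) ltac:(lia)).
  replace (S (j + (alpha + 2)) - j)%nat with (S (alpha + 2)) in E by lia.
  cbv beta in E. rewrite <- E.
  apply sm_ext; intros t Ht.
  destruct (Nat.leb_spec (Nat.max 1 (1 + t - alpha - 2)) (S j));
  destruct (Nat.leb_spec (S j) (Nat.min (1 + t) (alpha + 2)));
  destruct (Nat.leb_spec j t); destruct (Nat.leb_spec t (j + (alpha + 2))); simpl; try reflexivity; lia.
Qed.

Lemma fall_zero A r : (A < r)%nat -> fall A r = 0.
Proof.
  induction r; intros H; [lia|]. simpl.
  destruct (Nat.eq_dec r A) as [->|Hn]. rewrite Nat.sub_diag; simpl; ring.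
  rewrite IHr by lia. ring.
Qed.

Lemma fall_fact N r : (r <= N)%nat -> fall N r * INR (Factorial.fact (N - r)) = INR (Factorial.fact N).
Proof.
  induction r; intros H. simpl. rewrite Nat.sub_0_r; ring.
  simpl. rewrite <- IHr by lia. replace (N - r)%nat with (S (N - S r)) by lia.
  rewrite fact_simpl, mult_INR. ring.
Qed.

Lemma poch_fact k r : poch (INR (k + 1)) r * INR (Factorial.fact k) = INR (Factorial.fact (k + r)).
Proof.
  induction r. simpl. rewrite Nat.add_0_r; ring.
  simpl poch. replace (k + S r)%nat with (S (k + r)) by lia. rewrite fact_simpl.
  rewrite mult_INR, <- IHr. rewrite S_INR, !plus_INR. simpl INR. ring.
Qed.

Lemma C_n0 n : Binomial.C n 0 = 1.
Proof. unfold Binomial.C. rewrite Nat.sub_0_r. change (Factorial.fact 0) with 1%nat. simpl INR. field. apply INR_fact_neq_0. Qed.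

Lemma C_nn n : Binomial.C n n = 1.
Proof. unfold Binomial.C. rewrite Nat.sub_diag. change (Factorial.fact 0) with 1%nat. simpl INR. field. apply INR_fact_neq_0. Qed.

Lemma binom_C k l : (l <= k)%nat -> binom k l = Binomial.C k l.
Proof.
  revert l; induction k; intros l H.
  - destruct l; [|lia]. simpl. symmetry; apply C_n0.
  - destruct l. rewrite binom_0, C_n0; auto. simpl.
    destruct (Nat.eq_dec l k) as [->|Hn].
    + rewrite (binom_gt k (S k)) by lia. rewrite IHk, !C_nn by lia. ring.
    + rewrite !IHk by lia. apply pascal. lia.
Qed.

Lemma C_sym n k : (k <= n)%nat -> Binomial.C n (n - k) = Binomial.C n k.
Proof.
  intros H. unfold Binomial.C. replace (n - (n - k))%nat with k by lia. field.
  split; apply INR_fact_neq_0.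
Qed.

Lemma key N A r : (r <= A)%nat -> (r <= N)%nat ->
  Binomial.C N r * fall A r = Binomial.C A (A - r) * poch (INR (N - r + 1)) r.
Proof.
  intros H1 H2.
  assert (F1 := fall_fact A r H1). assert (F2 := poch_fact (N - r) r).
  replace (N - r + r)%nat with N in F2 by lia.
  assert (E1 : fall A r = INR (Factorial.fact A) / INR (Factorial.fact (A - r))).
  { rewrite <- F1. field. apply INR_fact_neq_0. }
  assert (E2 : poch (INR (N - r + 1)) r = INR (Factorial.fact N) / INR (Factorial.fact (N - r))).
  { rewrite <- F2. field. apply INR_fact_neq_0. }
  rewrite E1, E2. unfold Binomial.C. replace (A - (A - r))%nat with r by lia.
  field. repeat split; apply INR_fact_neq_0.
Qed.

Lemma sgn p q k : (p + q = 2 * k)%nat -> (-1) ^ p = (-1) ^ q.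
Proof.
  intros H. destruct (Nat.le_ge_cases p q).
  - replace q with (p + 2 * (k - p))%nat by lia. rewrite pow_add, pow_1_even; ring.
  - replace p with (q + 2 * (k - q))%nat by lia. rewrite pow_add, pow_1_even; ring.
Qed.

Lemma final_id alpha (Y : nat -> R -> R) x :
  (-1) ^ (alpha + 1) * exp x * x *
    leib expfam (fun j => leib (powfam (alpha + 1)) Y (alpha + 2 + j)%nat) (alpha + 2) x
  = sum_range 1 (2 * alpha + 4) (fun i => d_coef alpha i x * Y i x).
Proof.
  rewrite R1. unfold leib at 1.
  rewrite <- sm_scal.
  rewrite (sm_ext _ _ (fun m => sm (alpha + 2) (fun l =>
       (-1) ^ (alpha + 1) * x * (binom (alpha + 2) m * (-1) ^ m) *
       (binom (alpha + 2 + (alpha + 2 - m)) l * (fall (alpha + 1) l * x ^ (alpha + 1 - l))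
          * Y (alpha + 2 + (alpha + 2 - m) - l)%nat x)))).
  2:{ intros m Hm. rewrite sm_scal. unfold leib, powfam.
      rewrite (sm_trunc _ (alpha + 2)).
      2: lia.
      2:{ intros i Hi. rewrite fall_zero by lia. ring. }
      unfold expfam. rewrite exp_Ropp. field. apply Rgt_not_eq, exp_pos. }
  rewrite sm_rev. replace (S (alpha + 2) - 1)%nat with (alpha + 2)%nat by lia.
  rewrite (sm_ext _ _ (fun s => sm (alpha + 2) (fun j =>
       (-1) ^ (alpha + 1) * x * (binom (alpha + 2) (alpha + 2 - s) * (-1) ^ (alpha + 2 - s)) *
       (binom (alpha + 2 + (alpha + 2 - (alpha + 2 - s))) (alpha + 2 - 1 - j) *
        (fall (alpha + 1) (alpha + 2 - 1 - j) * x ^ (alpha + 1 - (alpha + 2 - 1 - j)))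
          * Y (alpha + 2 + (alpha + 2 - (alpha + 2 - s)) - (alpha + 2 - 1 - j))%nat x)))).
  2:{ intros s Hs. apply sm_rev. }
  rewrite sm_swap. apply sm_ext; intros j Hj. apply sm_ext; intros s Hs.
  replace (alpha + 2 - (alpha + 2 - s))%nat with s by lia.
  replace (alpha + 2 + s - (alpha + 2 - 1 - j))%nat with (1 + (j + s))%nat by lia.
  replace (alpha + 1 - (alpha + 2 - 1 - j))%nat with j by lia.
  replace (alpha + 2 - 1 - j)%nat with (alpha + 1 - j)%nat by lia.
  unfold dterm.
  replace (1 + (j + s) - S j)%nat with s by lia.
  replace (S j - 1)%nat with j by lia.
  replace (alpha + 2 - S j)%nat with (alpha + 1 - j)%nat by lia.
  rewrite !binom_C by lia. rewrite C_sym by lia.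
  assert (K := key (alpha + 2 + s) (alpha + 1) (alpha + 1 - j) ltac:(lia) ltac:(lia)).
  replace (alpha + 1 - (alpha + 1 - j))%nat with j in K by lia.
  replace (alpha + 2 + s - (alpha + 1 - j) + 1)%nat with (1 + (j + s) + 1)%nat in K by lia.
  transitivity ((-1) ^ (alpha + 1) * (-1) ^ (alpha + 2 - s) * Binomial.C (alpha + 2) s * x * x ^ j
     * Y (1 + (j + s))%nat x * (Binomial.C (alpha + 2 + s) (alpha + 1 - j) * fall (alpha + 1) (alpha + 1 - j))).
  ring. rewrite K. rewrite <- pow_add.
  rewrite (sgn (1 + (j + s) + S j + 1) (alpha + 1 + (alpha + 2 - s)) (alpha + j + 3)) by lia.
  rewrite pow_add. simpl pow. ring.
Qed.


Theorem corollary2p4 (alpha : nat) (y : R -> R) (Y : nat -> R -> R) :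
  is_Cn_derivs (2 * alpha + 4) y Y ->
  (exists G, is_derivs (alpha + 2) (fun x => x ^ (alpha + 1) * y x) G) /\
  (forall G, is_derivs (alpha + 2) (fun x => x ^ (alpha + 1) * y x) G ->
     (exists H, is_derivs (alpha + 2) (fun x => exp (- x) * G (alpha + 2)%nat x) H) /\
     (forall H, is_derivs (alpha + 2) (fun x => exp (- x) * G (alpha + 2)%nat x) H ->
        forall x, 0 <= x ->
          (-1) ^ (alpha + 1) * exp x * x * H (alpha + 2)%nat x
          = sum_range 1 (2 * alpha + 4) (fun i => d_coef alpha i x * Y i x))).
Proof.
  intros [hY _].
  set (KF := leib (powfam (alpha + 1)) Y).
  assert (hK : is_derivs (2 * alpha + 4) (fun x => x ^ (alpha + 1) * y x) KF).
  { apply leibniz; auto. apply powfam_derivs. }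
  split. { exists KF. apply (derivs_le _ _ _ _ hK). lia. }
  intros G hG.
  assert (eqG : forall x, 0 <= x -> KF (alpha + 2)%nat x = G (alpha + 2)%nat x).
  { intros x hx. apply (derivs_unique (alpha + 2) (fun x => x ^ (alpha + 1) * y x)); auto.
    apply (derivs_le _ _ _ _ hK). lia. }
  assert (hS : is_derivs (alpha + 2) (KF (alpha + 2)%nat) (fun j => KF (alpha + 2 + j)%nat)).
  { replace (alpha + 2)%nat with (2 * alpha + 4 - (alpha + 2))%nat at 1 by lia.
    apply (derivs_shift _ _ _ _ hK). lia. }
  set (MF := leib expfam (fun j => KF (alpha + 2 + j)%nat)).
  assert (hM : is_derivs (alpha + 2) (fun x => exp (- x) * G (alpha + 2)%nat x) MF).
  { apply (derivs_ext_f _ (fun x => exp (- x) * KF (alpha + 2)%nat x)).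
    intros z hz; rewrite eqG; auto. apply leibniz; auto. apply expfam_derivs. }
  split. { exists MF; auto. }
  intros H hH x hx.
  rewrite (derivs_unique _ _ _ _ hH hM (alpha + 2)) by (auto; lia).
  apply final_id.
Qed.
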